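(* Let $\ell$ and $w$ be linear spaces of sequences in $\mathbb{K}$ ($\mathbb{K}\in\{\mathbb{R},\mathbb{C}\}$), each endowed with a norm, quasi-norm or $\alpha$-norm, satisfying: (1) $\ell \subset c_0$ and $w\subset c_0$; (2) for all $x\in w$ and all $k\in\mathbb{N}$ one has $|x_k|\le \|x\|_w$; (3) $\ell$ is a linear subspace of $w$, the identity (embedding) operator $I\colon \ell\to w$ satisfies $0<\|I\|\le 1$, where $\|I\|=\sup_{x\in B_\ell}\|x\|_w$, and $e^j\in B_\ell$ for every $j\in\mathbb{N}$. Then $I$ is maximally non-compact, i.e. $\alpha(I)=\|I\|$.
   Context: $B_X$ denotes the closed unit ball of a (quasi/$\alpha$-)normed space $X$, and $e^j$ denotes the sequence with $1$ in the $j$-th position and $0$ elsewhere. $c_0$ is the space of scalar sequences converging to $0$. For a bounded map $T\colon X\to Y$ between (quasi/$\alpha$-)normed spaces, the ball measure of non-compactness is $\alpha(T)=\inf\{r>0:\ T(B_X)\subset\bigcup_{i=1}^m (y_i+rB_Y)\text{ for some } m\in\mathbb{N},\ y_1,\dots,y_m\in Y\}$, and the operator norm is $\|T\|=\sup_{x\in B_X}\|Tx\|$. $T$ is called maximally non-compact if $\alpha(T)=\|T\|$. *)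

(* Defs.v *)
From mathcomp Require Import all_boot all_order all_algebra.
From mathcomp Require Import all_classical all_reals all_analysis.
From mathcomp Require Import complex.

Set Implicit Arguments.
Unset Strict Implicit.
Unset Printing Implicit Defensive.

Import Order.TTheory GRing.Theory Num.Theory.
Import numFieldNormedType.Exports.
Local Open Scope classical_set_scope.
Local Open Scope ring_scope.

Section SeqSpaces.
(* Scalars K (R or C) with a real-valued absolute value absK : K -> R. *)
Variables (R : realType) (K : nzRingType) (absK : K -> R).

Definition zero_seq : nat -> K := fun _ => 0.
Definition add_seq (x y : nat -> K) : nat -> K := fun k => x k + y k.
Definition sub_seq (x y : nat -> K) : nat -> K := fun k => x k - y k.
Definition scale_seq (c : K) (x : nat -> K) : nat -> K := fun k => c * x k.

Definition unit_seq (j : nat) : nat -> K := fun k => if k == j then 1 else 0.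

Definition c0 : set (nat -> K) :=
  [set x | (fun k => absK (x k)) @ \oo --> (0 : R)].

Definition linear_space (L : set (nat -> K)) : Prop :=
  [/\ L zero_seq,
      (forall x y, L x -> L y -> L (add_seq x y)) &
      (forall c x, L x -> L (scale_seq c x))].

Definition quasi_norm (L : set (nat -> K)) (n : (nat -> K) -> R) (C : R) : Prop :=
  [/\ 1 <= C,
      (forall x, L x -> 0 <= n x),
      (forall x, L x -> (n x = 0 <-> x = zero_seq)),
      (forall c x, L x -> n (scale_seq c x) = absK c * n x) &
      (forall x y, L x -> L y -> n (add_seq x y) <= C * (n x + n y))].

Definition alpha_norm (L : set (nat -> K)) (n : (nat -> K) -> R) (a : R) : Prop :=
  [/\ 0 < a <= 1,
      (forall x, L x -> 0 <= n x),
      (forall x, L x -> (n x = 0 <-> x = zero_seq)),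
      (forall c x, L x -> n (scale_seq c x) = (absK c) `^ a * n x) &
      (forall x y, L x -> L y -> n (add_seq x y) <= n x + n y)].

(* a norm, quasi-norm or alpha-norm (norm = quasi-norm with C = 1) *)
Definition admissible_norm (L : set (nat -> K)) (n : (nat -> K) -> R) : Prop :=
  (exists C, quasi_norm L n C) \/ (exists a, alpha_norm L n a).

Definition unit_ball (L : set (nat -> K)) (n : (nat -> K) -> R) : set (nat -> K) :=
  [set x | L x /\ n x <= 1].

Definition embed_norm (L : set (nat -> K)) (nL : (nat -> K) -> R)
  (nW : (nat -> K) -> R) : \bar R :=
  ereal_sup [set (nW x)%:E | x in unit_ball L nL].

Definition finitely_covered (W : set (nat -> K)) (nW : (nat -> K) -> R)
  (S : set (nat -> K)) (r : R) : Prop :=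
  exists (m : nat) (y : nat -> (nat -> K)),
    (forall i, (i < m)%N -> W (y i)) /\
    S `<=` [set u | W u /\ exists2 i, (i < m)%N & nW (sub_seq u (y i)) <= r].

Definition embed_mnc (L : set (nat -> K)) (nL : (nat -> K) -> R)
  (W : set (nat -> K)) (nW : (nat -> K) -> R) : \bar R :=
  ereal_inf [set r%:E | r in [set r : R | 0 < r /\ finitely_covered W nW (unit_ball L nL) r]].

Definition maximally_noncompact_claim : Prop :=
  forall (L W : set (nat -> K)) (nL nW : (nat -> K) -> R),
    linear_space L -> admissible_norm L nL ->
    linear_space W -> admissible_norm W nW ->
    L `<=` c0 -> W `<=` c0 ->
    (forall x k, W x -> absK (x k) <= nW x) ->
    L `<=` W ->
    (0 < embed_norm L nL nW)%E -> (embed_norm L nL nW <= 1)%E ->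
    (forall j, unit_ball L nL (unit_seq j)) ->
    embed_mnc L nL W nW = embed_norm L nL nW.

End SeqSpaces.

(* Main.v *)
Require Import Defs.
From mathcomp Require Import all_boot all_order all_algebra.
From mathcomp Require Import all_classical all_reals all_analysis.
From mathcomp Require Import complex.
From mathcomp Require Import lra.
Local Open Scope ring_scope.

Import Order.TTheory GRing.Theory Num.Theory.
Import numFieldNormedType.Exports.
Local Open Scope classical_set_scope.

Section Gen.
Variables (R : realType) (K : nzRingType) (absK : K -> R).
Hypothesis abs1 : absK 1 = 1.
Hypothesis absT : forall a, 1 - absK a <= absK (1 - a).

Lemma unif_bound (m : nat) (P : nat -> nat -> Prop) :
  (forall i, (i < m)%N -> exists N, forall j, (N <= j)%N -> P i j) ->
  exists N, forall i, (i < m)%N -> forall j, (N <= j)%N -> P i j.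
Proof.
elim: m => [|m IH] H; first by exists 0%N.
have [N HN] : exists N, forall i, (i < m)%N -> forall j, (N <= j)%N -> P i j.
  by apply: IH => i im; apply: H; rewrite ltnS ltnW.
have [M HM] := H m (ltnSn m).
exists (maxn N M) => i; rewrite ltnS leq_eqVlt => /orP[/eqP->|im] j.
  by rewrite geq_max => /andP[_ ?]; apply: HM.
by rewrite geq_max => /andP[? _]; apply: HN.
Qed.

Lemma c0_ev (x : nat -> K) (e : R) : c0 absK x -> 0 < e ->
  exists N, forall j, (N <= j)%N -> absK (x j) < e.
Proof.
move=> /cvgrPdist_lt H e0; have := H e e0.
case=> N _ HN; exists N => j Nj.
apply: le_lt_trans (HN j Nj).
by rewrite sub0r normrN ler_norm.
Qed.

Lemma gen_claim : maximally_noncompact_claim absK.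
Proof.
move=> L W nL nW _ _ [W0 WD WZ] _ _ Wc0 H2 LW _ Ile1 Hej.
have ub : forall u, unit_ball L nL u -> (nW u <= 1)%R.
  move=> u Bu; rewrite -lee_fin; apply: le_trans Ile1.
  by apply: ereal_sup_ubound; exists u.
have N1 : embed_norm L nL nW = 1%E.
  apply/eqP; rewrite eq_le Ile1 /=.
  have h1 : (1 <= (nW (unit_seq K 0))%:E)%E.
    rewrite lee_fin -abs1.
    have := H2 (unit_seq K 0) 0%N (LW _ (Hej 0%N).1).
    by rewrite /unit_seq eqxx.
  apply: (le_trans h1); apply: ereal_sup_ubound.
  by exists (unit_seq K 0).
rewrite N1; apply/eqP; rewrite eq_le; apply/andP; split.
  apply: ereal_inf_lbound; exists 1 => //; split => //.
  exists 1%N, (fun _ => zero_seq K) => /=; split => // u Bu.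
  split; first exact: LW _ Bu.1.
  exists 0%N => //.
  have -> : sub_seq u (zero_seq K) = u by apply/funext => k; rewrite /sub_seq /zero_seq subr0.
  exact: ub.
apply: le_ereal_inf_tmp => _ [r [r0 [m [y [Wy cov]]]] <-].
rewrite lee_fin.
have key : forall e : R, 0 < e -> 1 - e <= r.
  move=> e e0.
  have [J HJ] := @unif_bound m (fun i j => absK (y i j) < e)
     (fun i im => c0_ev (y i) e (Wc0 _ (Wy i im)) e0).
  have [_ [i im Hi]] := cov _ (Hej J).
  have Wsub : W (sub_seq (unit_seq K J) (y i)).
    have -> : sub_seq (unit_seq K J) (y i) = add_seq (unit_seq K J) (scale_seq (-1) (y i)).
      by apply/funext => k; rewrite /sub_seq /add_seq /scale_seq mulN1r.
    exact: WD (LW _ (Hej J).1) (WZ _ _ (Wy i im)).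
  have h3 := H2 _ J Wsub.
  have h4 := HJ i im J (leqnn J).
  have h5 := absT (y i J).
  move: h3; rewrite /sub_seq /unit_seq eqxx => h3.
  apply: le_trans Hi; apply: le_trans h3; apply: le_trans h5.
  by rewrite lerD2l lerN2 ltW.
case: (lerP 1 r) => // hr.
have := key ((1 - r) / 2).
have hp : 0 < (1 - r) / 2 by apply: divr_gt0; [rewrite subr_gt0 | ].
move=> /(_ hp) h; exfalso; clear -h hr; lra.
Qed.
End Gen.

Theorem mainTheorem1 (R : realType) :
  maximally_noncompact_claim (fun x : R => `|x|) /\
  maximally_noncompact_claim (@Normc.normc R).
Proof.
split; apply: gen_claim.
- exact: normr1.
- move=> a /=; have := ler_normD (1 - a) a.
  rewrite subrK normr1 => h; clear -h; lra.
- exact: ComplexField.Normc.normc1.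
- move=> a; have := le_normcD (1 - a) a.
  rewrite subrK ComplexField.Normc.normc1 => h; clear -h; lra.
Qed.
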